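(* Let $\mathbf{u}=(u_n)$ be an a-sequence such that $s_\mathbf{u}(\mathbb{T})$ is open in $(\mathbb{T},\tau_\mathbf{u})$. Then the sequence of ratios $(q_n)$ of $\mathbf{u}$ is bounded.
   Context: An a-sequence is a strictly increasing sequence of integers $\mathbf{u}=(u_n)_{n\in\mathbb{N}}$ with $u_n\mid u_{n+1}$ for all $n$; its ratios are $q_0=u_0$ and $q_n=u_n/u_{n-1}$ for $n>0$. $\mathbb{T}=\mathbb{R}/\mathbb{Z}$, $\|x\|$ is the distance from $x$ to the nearest integer, $d(x,y)=\|x-y\|$. $s_\mathbf{u}(\mathbb{T})=\{x\in\mathbb{T}: u_nx\to0\text{ in }\mathbb{T}\}$. $\tau_\mathbf{u}$ is the topology on $\mathbb{T}$ induced by the metric $\varrho_\mathbf{u}(x,y)=\sup_n\max\{d(x,y),d(u_nx,u_ny)\}$. *)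

(* Defs.v *)
(* the circle T = R/Z is represented by R (all notions
   below are Z-periodic). *)
From HB Require Import structures.
From mathcomp Require Import all_boot all_order all_algebra.
From mathcomp Require Import all_classical all_reals all_analysis.
Set Implicit Arguments. Unset Strict Implicit. Unset Printing Implicit Defensive.
Import Order.TTheory GRing.Theory Num.Theory.
Import numFieldNormedType.Exports.
Local Open Scope classical_set_scope.
Local Open Scope ring_scope.

Definition a_sequence (u : nat -> int) : Prop :=
  (forall n, u n < u n.+1) /\ (forall n, (u n %| u n.+1)%Z).

Definition aseq_ratio (u : nat -> int) (n : nat) : int :=
  if n is m.+1 then (u m.+1 %/ u m)%Z else u 0%N.

Definition normT {R : realType} (x : R) : R :=
  Num.min (x - (Num.floor x)%:~R) ((Num.floor x)%:~R + 1 - x).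

Definition dT {R : realType} (x y : R) : R := normT (x - y).

Definition s_u {R : realType} (u : nat -> int) : set R :=
  [set x | normT ((u n)%:~R * x) @[n --> \oo] --> (0 : R)].

Definition rho_u {R : realType} (u : nat -> int) (x y : R) : R :=
  sup [set r | exists n : nat,
         r = Num.max (dT x y) (dT ((u n)%:~R * x) ((u n)%:~R * y))].

Definition open_tau {R : realType} (u : nat -> int) (A : set R) : Prop :=
  forall x, A x -> exists2 e : R, 0 < e & forall y, rho_u u x y < e -> A y.

(* Main.v *)
Require Import Defs.
From HB Require Import structures.
From mathcomp Require Import all_boot all_order all_algebra.
From mathcomp Require Import all_classical all_reals all_analysis.
From mathcomp Require Import ring lra zify.
Import Order.TTheory GRing.Theory Num.Theory.
Local Open Scope ring_scope.
Import numFieldNormedType.Exports.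
Section NT.
Variable R : realType.

Lemma normT_le (x : R) (m : int) : normT x <= `|x - m%:~R|.
Proof.
rewrite /normT; have /andP[h1 h2] := floor_itv x.
have [hm|hm] := lerP m (Num.floor x).
- rewrite ger0_norm; last by rewrite subr_ge0 (le_trans _ h1) // ler_int.
  by rewrite ge_min; apply/orP; left; rewrite lerB // ler_int; exact: hm.
- rewrite ler0_norm; last first.
    by rewrite subr_le0 (le_trans (ltW h2)) // ler_int lezD1.
  have hh : ((Num.floor x + 1)%:~R : R) <= m%:~R by rewrite ler_int lezD1.
  by rewrite ge_min; apply/orP; right; rewrite opprB lerB //; move: hh; rewrite intrD.
Qed.

Lemma floor_shift (x : R) (m : int) : Num.floor (x + m%:~R) = Num.floor x + m.
Proof.
apply: floor_def; have /andP[h1 h2] := floor_itv x.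
rewrite !intrD lerD2r -addrA (addrC m%:~R) addrA ltrD2r.
by rewrite h1 -intrD h2.
Qed.

Lemma normT_shift (x : R) (m : int) : normT (x + m%:~R) = normT x.
Proof.
rewrite /normT floor_shift intrD.
congr (Num.min _ _).
- ring.
- ring.
Qed.

Lemma normT_01 (s : R) : 0 <= s < 1 -> normT s = Num.min s (1 - s).
Proof.
move=> hs; rewrite /normT (_ : Num.floor s = 0) ?subr0 ?add0r //.
by apply: floor_def; rewrite add0r.
Qed.

Lemma normT0 : normT (0 : R) = 0.
Proof. by rewrite normT_01 ?lexx ?ltr01 // subr0; apply/min_idPl; rewrite ler01. Qed.

Lemma normT_ge0 (x : R) : 0 <= normT x.
Proof.
rewrite /normT; have /andP[h1 h2] := floor_itv x.
move: h2; rewrite intrD => h2.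
by rewrite le_min subr_ge0 h1 /= subr_ge0 ltW.
Qed.
End NT.
Section Seq.
Variable u : nat -> int.
Hypothesis hu : a_sequence u.

Lemma u_pos n : (0 < n)%N -> 0 < u n.
Proof.
case: n => // m _; case: hu => hlt hdv.
have [k hk] := dvdzP (hdv m.+1).
have [j hj] := dvdzP (hdv m).
have h1 := hlt m; have h2 := hlt m.+1.
rewrite ltNge; apply/negP => hle.
have [h0|hn] := eqVneq (u m.+1) 0.
  by move: h2; rewrite hk h0 mulr0 ltxx.
have hneg : u m.+1 < 0 by rewrite lt_neqAle hn hle.
have [hj1|hj1] := lerP j 0.
  have : 0 <= j * u m by rewrite mulr_le0 // ltW // (lt_trans h1 hneg).
  by rewrite -hj leNgt hneg.
have : j * u m <= u m.
  have := lt_trans h1 hneg; nia.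
by rewrite -hj leNgt h1.
Qed.

Lemma u_mono m n : (m <= n)%N -> u m <= u n.
Proof.
move=> /subnK <-; elim: (n - m)%N => // k ih; rewrite addSn.
exact: le_trans ih (ltW (hu.1 _)).
Qed.

Lemma u_dvd m n : (m <= n)%N -> (u m %| u n)%Z.
Proof.
move=> /subnK <-; elim: (n - m)%N => [|k ih]; first exact: dvdzz.
rewrite addSn; exact: dvdz_trans ih (hu.2 _).
Qed.

Lemma u_ratio n : (0 < n)%N -> u n = aseq_ratio u n * u n.-1.
Proof. by case: n => // m _ /=; rewrite divzK // hu.2. Qed.

Lemma ratio_ge0 n : (1 < n)%N -> 0 <= aseq_ratio u n.
Proof.
case: n => // [] [] // m _ /=; by rewrite divz_ge0 ?u_pos // ltW // u_pos.
Qed.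

Lemma bounded_upto N : exists M : int, forall i, (i <= N)%N -> `|aseq_ratio u i| <= M.
Proof.
elim: N => [|N [M hM]].
  by exists `|aseq_ratio u 0|; case.
exists (M + `|aseq_ratio u N.+1|) => i; rewrite leq_eqVlt => /orP[/eqP ->|hi].
  by rewrite lerDr (le_trans _ (hM 0%N _)).
by rewrite (le_trans (hM i hi)) // lerDl.
Qed.

Lemma unbounded : ~ (exists M : int, forall n : nat, `|aseq_ratio u n| <= M) ->
  forall (N : nat) (D : int), exists n, (N.+1 < n)%N /\ D <= aseq_ratio u n.
Proof.
move=> nb N D; have [M hM] := bounded_upto N.+1.
apply: contrapT => hc; apply: nb; exists (Num.max M D) => n.
case: (leqP n N.+1) => hn; first by rewrite le_max hM.
rewrite le_max; apply/orP; right.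
have h0 : 0 <= aseq_ratio u n by apply: ratio_ge0; apply: leq_trans hn.
rewrite ger0_norm //; apply: contrapT => hh; apply: hc; exists n; split => //.
by rewrite leNgt; apply/negP => h; apply: hh; rewrite ltW.
Qed.
End Seq.
Section Constr.
Variable R : realType.
Variable u : nat -> int.
Hypothesis hu : a_sequence u.
Variable D : nat.
Hypothesis hD : (4 <= D)%N.
Variable p : nat -> nat.
Hypothesis hpinc : forall k, (p k < p k.+1)%N.
Hypothesis hp0 : (1 < p 0)%N.
Hypothesis hpD : forall k, D%:Z <= aseq_ratio u (p k).

Definition tt k : int := (aseq_ratio u (p k) %/ D%:Z)%Z.
Definition vv (k : nat) : R := (u (p k).-1)%:~R.
Definition aa k : R := (tt k)%:~R / (u (p k))%:~R.
Definition SS L : R := \sum_(0 <= k < L) aa k.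
Definition yy : R := sup (range SS).
Definition dd : R := (D%:R)^-1.

Lemma p_ge k : (k.+2 <= p k)%N.
Proof. elim: k => // k ih; exact: leq_ltn_trans ih (hpinc k). Qed.

Lemma p_mono j k : (j <= k)%N -> (p j <= p k)%N.
Proof.
move=> /subnK <-; elim: (k - j)%N => // m ih; rewrite addSn.
exact: leq_trans ih (ltnW (hpinc _)).
Qed.

Lemma p_lt j k : (j < k)%N -> (p j < p k)%N.
Proof. move=> h; exact: (leq_trans (hpinc j) (@p_mono j.+1 k h)). Qed.

Lemma upk_pos k : 0 < u (p k).-1.
Proof. apply: (@u_pos u hu); have := p_ge k; lia. Qed.

Lemma vv_ge1 k : 1 <= vv k.
Proof. by rewrite /vv ler1z; have := upk_pos k; lia. Qed.

Lemma vv_gt0 k : 0 < vv k.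
Proof. exact: lt_le_trans ltr01 (vv_ge1 k). Qed.

Lemma up_eq k : (u (p k))%:~R = (aseq_ratio u (p k))%:~R * vv k :> R.
Proof.
rewrite /vv -intrM -(@u_ratio u hu) //; have := p_ge k; lia.
Qed.

Lemma D_pos : (0 : R) < D%:R.
Proof. by rewrite ltr0n; lia. Qed.

Lemma Q_ge k : (D%:R : R) <= (aseq_ratio u (p k))%:~R.
Proof. have h : ((D%:Z)%:~R : R) <= (aseq_ratio u (p k))%:~R by rewrite ler_int. exact: h. Qed.

Lemma tt_ge1 k : 1 <= tt k.
Proof.
have h1 := hpD k; have h2 := @ltz_ceil (aseq_ratio u (p k)) D%:Z.
rewrite /tt; move: h1 h2; set Q := aseq_ratio u (p k); set t := (Q %/ D%:Z)%Z.
have hD' : (4 <= D%:Z) by rewrite lez_nat.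
move=> h1 h2; have h3 := h2 (lt_le_trans (isT : (0 < 4 :> int)) hD'). nia.
Qed.

Lemma tt_le k : tt k * D%:Z <= aseq_ratio u (p k).
Proof. apply: lez_floor; rewrite eqz_nat; lia. Qed.

Lemma tt_ceil k : aseq_ratio u (p k) < (tt k + 1) * D%:Z.
Proof. apply: ltz_ceil; rewrite ltz_nat; lia. Qed.

Lemma Q_pos k : (0 : R) < (aseq_ratio u (p k))%:~R.
Proof. exact: lt_le_trans D_pos (Q_ge k). Qed.

Lemma tt_pos k : (0 : R) < (tt k)%:~R.
Proof. by rewrite ltr0z; have := tt_ge1 k; lia. Qed.

Lemma aa_ge0 k : 0 <= aa k.
Proof. by rewrite /aa up_eq divr_ge0 // ?mulr_ge0 // ltW // ?tt_pos ?Q_pos ?vv_gt0. Qed.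

Lemma aa_le k : aa k <= dd / vv k.
Proof.
have hQ := Q_pos k; have hv := vv_gt0 k; have hDp := D_pos.
have ht : (tt k)%:~R <= (aseq_ratio u (p k))%:~R / (D%:R : R).
  rewrite ler_pdivlMr //.
  have h : ((tt k * D%:Z)%:~R : R) <= (aseq_ratio u (p k))%:~R by rewrite ler_int tt_le.
  by move: h; rewrite intrM.
rewrite /aa up_eq.
apply: (le_trans (y := (aseq_ratio u (p k))%:~R / (D%:R : R) / ((aseq_ratio u (p k))%:~R * vv k))).
  by rewrite ler_wpM2r // invr_ge0 mulr_ge0 // ltW.
rewrite /dd le_eqVlt; apply/orP; left; apply/eqP; field.
by rewrite gt_eqF // gt_eqF // gt_eqF.
Qed.

Lemma vv_double k : 2 * vv k <= vv k.+1.
Proof.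
have hv := vv_gt0 k.
have h1 : (u (p k))%:~R <= vv k.+1.
  rewrite /vv ler_int; apply: (@u_mono u hu); have := hpinc k; lia.
apply: (le_trans _ h1); rewrite up_eq ler_pM2r //.
apply: (le_trans _ (Q_ge k)); rewrite ler_nat; lia.
Qed.

Lemma geom m K : \sum_(K <= k < K + m) aa k <= 2 * dd / vv K.
Proof.
have hdd : 0 < dd by rewrite /dd invr_gt0 D_pos.
elim: m K => [|m ih] K.
  by rewrite addn0 big_geq // divr_ge0 ?mulr_ge0 // ltW // ?vv_gt0.
rewrite -addSnnS big_ltn; last by lia.
apply: (le_trans (lerD (aa_le K) (ih K.+1))).
have hv := vv_gt0 K; have hv1 := vv_gt0 K.+1; have h2 := vv_double K.
have : 2 * dd / vv K.+1 <= dd / vv K.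
  rewrite ler_pdivrMr // mulrAC ler_pdivlMr //.
  nra.
lra.
Qed.

Lemma dd_gt0 : 0 < dd.
Proof. by rewrite /dd invr_gt0 D_pos. Qed.

Lemma SS_tail K L : (K <= L)%N -> SS L = SS K + \sum_(K <= k < L) aa k.
Proof. by move=> h; rewrite /SS (@big_cat_nat _ _ _ K 0 L _ _ (leq0n K) h). Qed.

Lemma sum_ge0 K L : 0 <= \sum_(K <= k < L) aa k.
Proof. by apply: sumr_ge0 => k _; exact: aa_ge0. Qed.

Lemma SS_bound K L : SS L <= SS K + 2 * dd / vv K.
Proof.
have h0 : 0 <= 2 * dd / vv K by rewrite divr_ge0 ?mulr_ge0 // ltW // ?dd_gt0 ?vv_gt0.
case: (leqP L K) => h.
  rewrite (@SS_tail L K h); have := sum_ge0 L K; lra.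
rewrite (@SS_tail K L (ltnW h)) lerD2l -(subnKC (ltnW h)); exact: geom.
Qed.

Lemma has_ub : has_ubound (range SS).
Proof. exists (SS 0 + 2 * dd / vv 0) => r [L _ <-]; exact: SS_bound. Qed.

Lemma yy_ge L : SS L <= yy.
Proof. by apply: ub_le_sup; [exact: has_ub | exists L]. Qed.

Lemma yy_le K : yy <= SS K + 2 * dd / vv K.
Proof.
apply: ge_sup; first by exists (SS 0), 0%N.
by move=> r [L _ <-]; exact: SS_bound.
Qed.

Lemma upper (c : int) K : (`|c|%:~R : R) <= vv K ->
  `|c%:~R * yy - c%:~R * SS K| <= 2 * dd.
Proof.
move=> hc; rewrite -mulrBr normrM (ger0_norm (x := yy - SS K)); last first.
  by rewrite subr_ge0 yy_ge.
have h1 : yy - SS K <= 2 * dd / vv K by rewrite lerBlDl yy_le.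
have h2 : 0 <= yy - SS K by rewrite subr_ge0 yy_ge.
have hv := vv_gt0 K.
rewrite -intr_norm.
apply: (le_trans (y := vv K * (2 * dd / vv K))).
  apply: (le_trans (ler_wpM2r h2 hc)); rewrite ler_wpM2l // ltW //.
by rewrite mulrC divfK // gt_eqF.
Qed.

Lemma int_part (c : int) K : (forall k, (k < K)%N -> (u (p k) %| c)%Z) ->
  c%:~R * SS K = (\sum_(0 <= k < K) ((c %/ u (p k))%Z * tt k))%:~R.
Proof.
move=> hdv; rewrite /SS mulr_sumr rmorph_sum; apply: eq_big_nat => k /andP[_ hk].
rewrite /aa /= intrM -{1}(divzK (hdv k hk)) intrM.
have hu0 : (u (p k))%:~R != 0 :> R.
  by rewrite intr_eq0 gt_eqF // (@u_pos u hu) //; have := p_ge k; lia.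
by field.
Qed.

Lemma lower k : dd / 2 <= vv k * yy - vv k * SS k.
Proof.
have h1 : SS k + aa k <= yy.
  by have := yy_ge k.+1; rewrite /SS big_nat_recr //.
have hv := vv_gt0 k.
apply: (le_trans (y := vv k * aa k)); last first.
  by rewrite -mulrBr; apply: ler_wpM2l; [exact: ltW | lra].
have -> : vv k * aa k = (tt k)%:~R / (aseq_ratio u (p k))%:~R.
  rewrite /aa up_eq; field; rewrite !gt_eqF //; exact: Q_pos.
have hQ := Q_pos k; have hDp := D_pos.
rewrite ler_pdivlMr // /dd.
have h2 : ((aseq_ratio u (p k))%:~R : R) <= (2 * tt k * D%:Z)%:~R.
  rewrite ler_int; have := tt_ceil k; have := tt_ge1 k; nia.
rewrite !intrM in h2.
have e1 : (D%:~R : R) = D%:R by [].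
have e2 : (2%:~R : R) = 2 by [].
rewrite e1 e2 in h2.
have -> : D%:R^-1 / 2 * (aseq_ratio u (p k))%:~R = (aseq_ratio u (p k))%:~R / (2 * D%:R) :> R.
  by field; rewrite gt_eqF.
rewrite ler_pdivrMr ?mulr_gt0 //; lra.
Qed.
End Constr.
Lemma normT_neg_bound {R : realType} (z : R) (I : int) b :
  `|z - I%:~R| <= b -> normT (- z) <= b.
Proof.
move=> h; apply: (le_trans (@normT_le R (- z) (- I))).
by rewrite mulrNz -opprD normrN.
Qed.

Lemma absu_le (u : nat -> int) (hu : a_sequence u) n m :
  (n <= m)%N -> (0 < m)%N -> `|u n| <= u m.
Proof.
move=> hnm hm; case: n hnm => [|n] hnm.
  apply: (le_trans _ (@u_mono u hu 1 m hm)).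
  have [k hk] : exists k : int, u 1%N = k * u 0%N by apply/dvdzP; exact: hu.2 0%N.
  have h1 := @u_pos u hu 1 isT; rewrite hk in h1 *.
  have [h0|h0] := lerP 0 (u 0%N).
    rewrite ger0_norm //; have [hk0|hk0] := lerP k 0; nia.
  rewrite ltr0_norm //; have [hk0|hk0] := lerP k (-1); nia.
rewrite gtr0_norm ?(@u_pos u hu) //; exact: (@u_mono u hu).
Qed.
Theorem mainTheorem9 (R : realType) (u : nat -> int) :
  a_sequence u -> open_tau u (@s_u R u) ->
  exists M : int, forall n : nat, `|aseq_ratio u n| <= M.
Proof.
move=> hu hopen; apply: contrapT => nb.
have hunb := @unbounded u hu nb.
have s0 : @s_u R u 0.
  rewrite /s_u /=.
  have -> : (fun n : nat => normT ((u n)%:~R * (0:R))) = (fun _ => (0:R)).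
    by apply: funext => n; rewrite mulr0 normT0.
  exact: cvg_cst.
have [e he hb] := hopen 0 s0.
set D := (Num.truncn (2 / e)).+4.
have hD : (3 < D)%N by [].
have hDpos : (0 : R) < D%:R by rewrite ltr0n.
have hdd : 0 < dd R D by rewrite /dd invr_gt0.
have hddD : dd R D * D%:R = 1 by rewrite /dd mulVf // gt_eqF.
have hD4 : (4 : R) <= D%:R by rewrite ler_nat.
have hDe : 2 * dd R D < e.
  have h1 := truncnS_gt (2 / e).
  have h2 : ((Num.truncn (2 / e)).+1%:R : R) <= D%:R by rewrite ler_nat /D; lia.
  have h3 : 2 / e < D%:R := lt_le_trans h1 h2.
  rewrite ltr_pdivrMr // in h3.
  nra.
have hg : forall N, exists n, (N.+1 < n)%N /\ D%:Z <= aseq_ratio u n :=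
  fun N => hunb N D%:Z.
pose g N := proj1_sig (cid (hg N)).
have hgP N : (N.+1 < g N)%N /\ D%:Z <= aseq_ratio u (g N) := proj2_sig (cid (hg N)).
pose p k := iter k.+1 g 0%N.
have hpinc : forall k, (p k < p k.+1)%N.
  move=> k; rewrite /p iterS; have [h _] := hgP (iter k.+1 g 0%N).
  exact: ltn_trans (ltnSn _) h.
have hp0 : (1 < p 0%N)%N by have [h _] := hgP 0%N; exact: h.
have hpD : forall k, D%:Z <= aseq_ratio u (p k) by move=> k; exact: (hgP _).2.
set y := yy R u D p.
have hrho : rho_u u 0 y < e.
  apply: (le_lt_trans _ hDe); apply: ge_sup.
    by eexists; exists 0%N.
  move=> r [n ->]; rewrite ge_max; apply/andP; split.
    rewrite /dT sub0r; apply: (@normT_neg_bound R _ (0)).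
    have := @upper R u hu D hD p hpinc hp0 hpD 1 0%N.
    rewrite /SS big_geq // !mul1r => h; apply: h.
    by have := @vv_ge1 R u hu D hD p hpinc hp0 0%N; rewrite normr1.
  rewrite /dT mulr0 sub0r.
  have hex : exists k, (fun k => (n < p k)%N) k.
    by exists n; have := @p_ge p hpinc hp0 n; rewrite /=; lia.
  case: (ex_minnP hex) => K hK hmin.
  have hdv : forall k, (k < K)%N -> (u (p k) %| u n)%Z.
    move=> k hk; apply: (@u_dvd u hu); rewrite leqNgt; apply/negP => hk'.
    by have := hmin k hk'; rewrite leqNgt hk.
  apply: (@normT_neg_bound R _ (\sum_(0 <= k < K) ((u n %/ u (p k))%Z * tt u D p k))).
  rewrite -(@int_part R u hu D hD p hpinc hp0 _ _ hdv).
  apply: upper => //; rewrite /vv ler_int; apply: (@absu_le u hu); have := @p_ge p hpinc hp0 K; move: hK => /=; lia.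
have ys := hb y hrho.
have hlt : (0 : R) < dd R D / 2 by rewrite divr_gt0.
have := cvgr_lt 0 ys (dd R D / 2) hlt.
move=> [N _ hN].
have hpN := @p_ge p hpinc hp0 N.
have := hN (p N).-1 ltac:(rewrite /=; lia).
rewrite /=.
set c := u (p N).-1.
have hdv : forall k, (k < N)%N -> (u (p k) %| c)%Z.
  move=> k hk; apply: (@u_dvd u hu); have := @p_lt p hpinc _ _ hk; lia.
have hint := @int_part R u hu D hD p hpinc hp0 _ _ hdv.
have hlo := @lower R u hu D hD p hpinc hp0 hpD N.
have hup := @upper R u hu D hD p hpinc hp0 hpD c N.
have hc : `|c|%:~R <= vv R u p N.
  rewrite /vv ler_int; apply: (@absu_le u hu) => //; lia.
have {}hup := hup hc.
change (is_true (dd R D / 2 <= c%:~R * y - c%:~R * SS R u D p N)) in hlo.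
change (is_true (`|c%:~R * y - c%:~R * SS R u D p N| <= 2 * dd R D)) in hup.
have -> : c%:~R * y = (c%:~R * y - c%:~R * SS R u D p N) + c%:~R * SS R u D p N.
  by rewrite subrK.
rewrite {2}hint normT_shift.
set s := c%:~R * y - c%:~R * SS R u D p N in hlo hup *.
have hs2 : s <= 2 * dd R D by exact: (le_trans (ler_norm s) hup).
have hdd4 : dd R D * 4 <= 1.
  nra.
rewrite normT_01; last by apply/andP; split; lra.
rewrite gt_min => /orP[] ; lra.
Qed.
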